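(* Let $n\ge 1$ and $1\le c\le n$. The minimum algorithm size (MAS) of the $c$-scattering problem ($c$SCT) for a swarm of $n$ robots under the SSYNC scheduler is exactly $c$: there is an algorithm of size $c$ that solves $c$SCT, and no algorithm of size smaller than $c$ solves it.
   Context: Model. A swarm consists of $n\ge1$ robots $r_1,\dots,r_n$, modeled as points in $\mathbb R^2$. Each robot $r_i$ has a local right-handed $x$-$y$ coordinate system $Z_i$ whose origin is always the robot's current position, with arbitrary (adversarially chosen, fixed) unit length and axis orientation; robots do not share coordinate systems. The configuration at time $t$ is the multiset $P_t$ of the $n$ robot positions (robots can detect multiplicities). A target function $\phi$ maps each finite multiset $P$ of points of $\mathbb R^2$ with $(0,0)\in P$ to a point $\phi(P)\in\mathbb R^2$. Time is discrete, $t=0,1,2,\dots$. Under the semi-synchronous (SSYNC) scheduler, at each time $t$ an adversary chooses a set of robots to activate; each activated robot $r_i$ observes $P_t$ expressed in $Z_i$, evaluates its target function on this multiset, and moves to the resulting point (interpreted in $Z_i$), arriving before time $t+1$; non-activated robots do not move. Schedules are fair: every robot is activated infinitely often. An algorithm of size $m$ is a set $\Phi$ of $m$ distinct target functions ($m\le n$); an assignment is a surjection $\mathcal A$ from the robots onto $\Phi$, robot $r_i$ using $\mathcal A(r_i)$. $\Phi$ solves a problem if for every assignment, every choice of local coordinate systems, every initial configuration and every fair SSYNC schedule, the resulting execution solves the problem. The MAS of a problem is the least $m$ such that some algorithm of size $m$ solves it, and $\infty$ if no algorithm of any size $m\le n$ solves it. For a multiset $P$, $\overline P$ denotes its set of distinct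 points. Problem. The $c$-scattering problem ($c$SCT): starting from any initial configuration, the execution must reach a configuration $P$ with $|\overline P|\ge c$. *)

(* Defs.v *)
From Stdlib Require Import Reals List Permutation Arith.
From Coquelicot Require Import Coquelicot.
Import ListNotations.
Open Scope R_scope.

(** An orientation-preserving
    similarity frame of a robot (right-handed, arbitrary unit length and
    axis orientation) is a nonzero complex number [f]: local coordinates [q]
    correspond to the global point [pos + f * q]. *)
Definition point := C.
Definition origin : point := RtoC 0.

(** Multisets are represented by lists; a target function must be
    invariant under permutation of its input list. *)
Definition target := list point -> point.

Definition multiset_fun (phi : target) : Prop :=
  forall s s', Permutation s s' -> phi s = phi s'.

(** Two target functions are distinct iff they differ on some multiset
    containing the origin (their domain). *)
Definition distinct_targets (phi psi : target) : Prop :=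
  exists s, In origin s /\ phi s <> psi s.

Definition dflt_target : target := fun _ => origin.

Definition is_algorithm (n m : nat) (Phi : list target) : Prop :=
  length Phi = m /\ (m <= n)%nat /\
  (forall k, (k < m)%nat -> multiset_fun (nth k Phi dflt_target)) /\
  (forall k l, (k < m)%nat -> (l < m)%nat -> k <> l ->
     distinct_targets (nth k Phi dflt_target) (nth l Phi dflt_target)).

Definition is_assignment (n m : nat) (A : nat -> nat) : Prop :=
  (forall i, (i < n)%nat -> (A i < m)%nat) /\
  (forall k, (k < m)%nat -> exists i, (i < n)%nat /\ A i = k).

Definition config_ms (n : nat) (pos : nat -> point) : list point :=
  map pos (seq 0 n).

Definition local_view (n : nat) (f : point) (pos : nat -> point) (i : nat) : list point :=
  map (fun j => Cdiv (Cminus (pos j) (pos i)) f) (seq 0 n).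

Fixpoint exec (n : nat) (Phi : list target) (A : nat -> nat) (F : nat -> point)
    (P0 : nat -> point) (act : nat -> nat -> bool) (t : nat) : nat -> point :=
  match t with
  | O => P0
  | S t' =>
      let pos := exec n Phi A F P0 act t' in
      fun i => if act t' i
               then Cplus (pos i) (Cmult (F i) (nth (A i) Phi dflt_target (local_view n (F i) pos i)))
               else pos i
  end.

Definition fair (n : nat) (act : nat -> nat -> bool) : Prop :=
  forall i, (i < n)%nat -> forall t, exists t', (t <= t')%nat /\ act t' i = true.

Definition at_least_distinct (n c : nat) (pos : nat -> point) : Prop :=
  exists l : list point, length l = c /\ NoDup l /\
    forall p, In p l -> In p (config_ms n pos).

Definition solves_cSCT (n c : nat) (Phi : list target) : Prop :=
  forall (A : nat -> nat) (F : nat -> point) (P0 : nat -> point) (act : nat -> nat -> bool),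
    is_assignment n (length Phi) A ->
    (forall i, F i <> origin) ->
    fair n act ->
    exists t, at_least_distinct n c (exec n Phi A F P0 act t).

(* Main.v *)
Require Import Defs.
From Stdlib Require Import Reals List Arith Lra Lia Permutation Classical.
From Coquelicot Require Import Coquelicot.
Import ListNotations.
Open Scope R_scope.

Lemma exec_same_class n Phi A (t : nat) :
  forall i j, A i = A j ->
  exec n Phi A (fun _ => RtoC 1) (fun _ => origin) (fun _ _ => true) t i =
  exec n Phi A (fun _ => RtoC 1) (fun _ => origin) (fun _ _ => true) t j.
Proof.
  induction t as [|t IH]; intros i j H; simpl; [reflexivity|].
  rewrite (IH i j H). unfold local_view.
  replace (map (fun j0 => Cdiv (Cminus (exec n Phi A (fun _ => RtoC 1) (fun _ => origin) (fun _ _ => true) t j0)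
     (exec n Phi A (fun _ => RtoC 1) (fun _ => origin) (fun _ _ => true) t i)) (RtoC 1)) (seq 0 n))
  with (map (fun j0 => Cdiv (Cminus (exec n Phi A (fun _ => RtoC 1) (fun _ => origin) (fun _ _ => true) t j0)
     (exec n Phi A (fun _ => RtoC 1) (fun _ => origin) (fun _ _ => true) t j)) (RtoC 1)) (seq 0 n)).
  2:{ apply map_ext; intro; rewrite (IH i j H); reflexivity. }
  rewrite H; reflexivity.
Qed.

Lemma lower_bound (n c m : nat) (Phi : list target) :
  (1 <= m < c)%nat -> is_algorithm n m Phi -> ~ solves_cSCT n c Phi.
Proof.
  intros Hm [Hlen [Hmn _]] Hs.
  set (A := fun i => Nat.min i (m - 1)).
  assert (HA : is_assignment n (length Phi) A).
  { rewrite Hlen. split.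
    - intros i _. unfold A. lia.
    - intros k Hk. exists k. split; [lia|]. unfold A. lia. }
  destruct (Hs A (fun _ => RtoC 1) (fun _ => origin) (fun _ _ => true) HA) as [t [l [Hl [Hnd Hin]]]].
  - intros _ E. injection E. lra.
  - intros i _ t. exists t. split; auto.
  - set (pos := exec n Phi A (fun _ => RtoC 1) (fun _ => origin) (fun _ _ => true) t) in *.
    assert (incl l (map pos (seq 0 m))).
    { intros p Hp. apply Hin in Hp. unfold config_ms in Hp.
      apply in_map_iff in Hp. destruct Hp as [i [<- Hi]].
      apply in_seq in Hi.
      apply in_map_iff. exists (A i). split.
      - unfold pos. apply exec_same_class. unfold A. lia.
      - apply in_seq. unfold A. lia. }
    pose proof (NoDup_incl_length Hnd H). rewrite length_map, length_seq in H0. lia.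
Qed.

Definition term (x : C) : R := if Req_EM_T (Cmod x) 0 then 0 else / Cmod x.
Definition gs (s : list C) : R := fold_right (fun x acc => term x + acc) 0 s.
Definition rr (k : nat) : R := INR k / (4 * (INR k + 1)).
Definition phi (k : nat) : target := fun s =>
  RtoC (if Req_EM_T (gs s) 0 then INR k else rr k / gs s).

Lemma term_nonneg (x : C) : 0 <= term x.
Proof.
  unfold term; destruct Req_EM_T; [lra|].
  pose proof (Cmod_ge_0 x). apply Rlt_le, Rinv_0_lt_compat. lra.
Qed.

Lemma gs_nonneg (s : list C) : 0 <= gs s.
Proof. induction s; simpl; [lra|]. pose proof (term_nonneg a); lra. Qed.

Lemma gs_ge (s : list C) (x : C) : In x s -> x <> 0 -> / Cmod x <= gs s.
Proof.
  intros Hin Hx. induction s as [|a s IH]; simpl in *; [contradiction|].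
  destruct Hin as [<-|Hin].
  - pose proof (gs_nonneg s). unfold term. destruct Req_EM_T as [e|_].
    + apply Cmod_eq_0 in e; contradiction.
    + lra.
  - pose proof (term_nonneg a). specialize (IH Hin). lra.
Qed.

Lemma gs_perm (s s' : list C) : Permutation s s' -> gs s = gs s'.
Proof.
  induction 1; simpl; try lra.
Qed.

Lemma term_scale (x F : C) : F <> 0 -> term (Cdiv x F) = Cmod F * term x.
Proof.
  intros HF. pose proof (proj1 (Cmod_gt_0 F) HF).
  unfold term. rewrite Cmod_div by auto.
  destruct (Req_EM_T (Cmod x) 0) as [e|e];
  destruct (Req_EM_T (Cmod x / Cmod F) 0) as [e'|e'].
  - lra.
  - rewrite e in e'. unfold Rdiv in e'. rewrite Rmult_0_l in e'. contradiction.
  - exfalso. apply e. unfold Rdiv in e'. apply Rmult_integral in e'.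
    destruct e' as [e'|e']; auto. pose proof (Rinv_neq_0_compat (Cmod F)). lra.
  - field. split; lra.
Qed.

Lemma gs_scale (f : nat -> C) (F : C) (L : list nat) : F <> 0 ->
  gs (map (fun j => Cdiv (f j) F) L) = Cmod F * gs (map f L).
Proof.
  intros HF. induction L; simpl; [ring|].
  rewrite IHL, term_scale by auto. ring.
Qed.

Lemma rr_nonneg k : 0 <= rr k.
Proof. unfold rr. pose proof (pos_INR k). apply Rmult_le_pos; [lra|]. apply Rlt_le, Rinv_0_lt_compat. lra. Qed.

Lemma rr_pos k : (1 <= k)%nat -> 0 < rr k.
Proof. intros H. unfold rr. pose proof (lt_0_INR k ltac:(lia)). apply Rmult_lt_0_compat; [lra|]. apply Rinv_0_lt_compat. lra. Qed.

Lemma rr_le k : rr k <= / 4.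
Proof.
  unfold rr. pose proof (pos_INR k).
  apply (Rmult_le_reg_r (4 * (INR k + 1))); [lra|].
  field_simplify; lra.
Qed.

Lemma rr_inj a b : rr a = rr b -> a = b.
Proof.
  unfold rr. intros H. pose proof (pos_INR a). pose proof (pos_INR b).
  apply INR_eq.
  assert (Hk : INR a * (INR b + 1) = INR b * (INR a + 1)).
  { apply (f_equal (fun z => z * (4 * (INR a + 1)) * (4 * (INR b + 1)))) in H.
    field_simplify in H; try lra. }
  lra.
Qed.

Lemma gs_zero (s : list C) : (forall x, In x s -> x = 0) -> gs s = 0.
Proof.
  induction s; simpl; intros H; [reflexivity|].
  rewrite IHs by auto. rewrite (H a) by auto. unfold term. rewrite Cmod_0.
  destruct Req_EM_T; lra.
Qed.

Definition disp (n : nat) (A : nat -> nat) (F : nat -> C) (pos : nat -> C) (b : nat -> bool) (i : nat) : C :=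
  if b i then Cmult (F i) (phi (A i) (local_view n (F i) pos i)) else RtoC 0.
Definition Gi (n : nat) (pos : nat -> C) (i : nat) : R :=
  gs (map (fun j => Cminus (pos j) (pos i)) (seq 0 n)).

Lemma view_gs n (f : C) pos i : f <> 0 -> gs (local_view n f pos i) = Cmod f * Gi n pos i.
Proof. intros Hf. unfold local_view, Gi. apply (gs_scale (fun j => Cminus (pos j) (pos i))); auto. Qed.

Lemma Gi_ge n pos i j : (j < n)%nat -> pos j <> pos i ->
  / Cmod (Cminus (pos j) (pos i)) <= Gi n pos i /\ 0 < Gi n pos i.
Proof.
  intros Hj Hne.
  assert (Hnz : Cminus (pos j) (pos i) <> 0).
  { intro E. apply Hne. replace (pos j) with (Cplus (Cminus (pos j) (pos i)) (pos i)) by ring.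
    rewrite E. ring. }
  assert (H : / Cmod (Cminus (pos j) (pos i)) <= Gi n pos i).
  { apply gs_ge; auto. apply in_map_iff. exists j. split; auto. apply in_seq. lia. }
  split; auto. pose proof (proj1 (Cmod_gt_0 _) Hnz).
  pose proof (Rinv_0_lt_compat _ H0). lra.
Qed.

Lemma disp_mod n A (F : nat -> C) (pos : nat -> C) b i : F i <> 0 -> b i = true -> 0 < Gi n pos i ->
  Cmod (disp n A F pos b i) = rr (A i) / Gi n pos i.
Proof.
  intros HF Hb HG. unfold disp. rewrite Hb. unfold phi. rewrite view_gs by exact HF.
  pose proof (proj1 (Cmod_gt_0 _) HF).
  destruct Req_EM_T as [e|_].
  - exfalso. apply Rmult_integral in e. lra.
  - rewrite Cmod_mult, Cmod_R. rewrite Rabs_pos_eq.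
    + field. lra.
    + pose proof (rr_nonneg (A i)). apply Rmult_le_pos; auto.
      apply Rlt_le, Rinv_0_lt_compat. nra.
Qed.

Lemma disp_nz n A (F : nat -> C) (pos : nat -> C) b i : F i <> 0 -> b i = true -> (1 <= A i)%nat ->
  disp n A F pos b i <> 0.
Proof.
  intros HF Hb Hk E. apply (f_equal Cmod) in E. rewrite Cmod_0 in E.
  unfold disp in E. rewrite Hb in E. unfold phi in E. rewrite Cmod_mult, Cmod_R in E.
  pose proof (proj1 (Cmod_gt_0 _) HF).
  apply Rmult_integral in E. destruct E as [E|E]; [lra|].
  apply Rabs_eq_0 in E.
  pose proof (gs_nonneg (local_view n (F i) pos i)).
  destruct Req_EM_T as [e|e].
  - pose proof (lt_0_INR (A i) ltac:(lia)). lra.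
  - pose proof (rr_pos _ Hk).
    assert (0 < rr (A i) / gs (local_view n (F i) pos i)).
    { apply Rmult_lt_0_compat; auto. apply Rinv_0_lt_compat. lra. }
    lra.
Qed.

Lemma disp_class0 n A (F : nat -> C) (pos : nat -> C) b i : A i = 0%nat -> disp n A F pos b i = 0.
Proof.
  intros H. unfold disp. destruct (b i); [|reflexivity].
  unfold phi. rewrite H. unfold rr. simpl INR.
  destruct Req_EM_T; [|unfold Rdiv]; apply injective_projections; simpl; ring.
Qed.

Lemma disp_bound n A (F : nat -> C) (pos : nat -> C) b i j : (j < n)%nat -> pos j <> pos i -> F i <> 0 ->
  Cmod (disp n A F pos b i) <= / 4 * Cmod (Cminus (pos j) (pos i)).
Proof.
  intros Hj Hne HF. destruct (Gi_ge n pos i j Hj Hne) as [Hge Hpos].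
  pose proof (Cmod_ge_0 (Cminus (pos j) (pos i))).
  destruct (b i) eqn:Hb.
  - rewrite disp_mod by auto.
    set (D := Cmod (Cminus (pos j) (pos i))) in *.
    assert (HD : 0 < D).
    { unfold D. apply Cmod_gt_0. intro E. apply Hne.
      replace (pos j) with (Cplus (Cminus (pos j) (pos i)) (pos i)) by ring.
      rewrite E. ring. }
    assert (Hinv : / Gi n pos i <= D).
    { rewrite <- (Rinv_inv D). apply Rinv_le_contravar; auto. apply Rinv_0_lt_compat; auto. }
    pose proof (rr_nonneg (A i)). pose proof (rr_le (A i)).
    unfold Rdiv. apply Rle_trans with (rr (A i) * D).
    + apply Rmult_le_compat_l; auto.
    + nra.
  - unfold disp. rewrite Hb. rewrite Cmod_0. lra.
Qed.

Lemma nomerge n A (F : nat -> C) (pos : nat -> C) b a c0 : (a < n)%nat -> (c0 < n)%nat ->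
  pos a <> pos c0 -> F a <> 0 -> F c0 <> 0 ->
  Cplus (pos a) (disp n A F pos b a) <> Cplus (pos c0) (disp n A F pos b c0).
Proof.
  intros Ha Hc Hne HFa HFc E.
  pose proof (disp_bound n A F pos b a c0 Hc (fun e => Hne (eq_sym e)) HFa) as B1.
  pose proof (disp_bound n A F pos b c0 a Ha Hne HFc) as B2.
  assert (Hd : Cminus (pos c0) (pos a) = Cplus (disp n A F pos b a) (Copp (disp n A F pos b c0))).
  { replace (pos c0) with (Cplus (pos c0) (Cplus (disp n A F pos b c0) (Copp (disp n A F pos b c0)))) by ring.
    replace (Cplus (pos c0) (Cplus (disp n A F pos b c0) (Copp (disp n A F pos b c0)))) with
      (Cplus (Cplus (pos c0) (disp n A F pos b c0)) (Copp (disp n A F pos b c0))) by ring.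
    rewrite <- E. ring. }
  assert (Hs : Cmod (Cminus (pos a) (pos c0)) = Cmod (Cminus (pos c0) (pos a))).
  { rewrite <- Cmod_opp. f_equal. ring. }
  pose proof (Cmod_triangle (disp n A F pos b a) (Copp (disp n A F pos b c0))) as T.
  rewrite Cmod_opp, <- Hd in T.
  assert (HD : 0 < Cmod (Cminus (pos c0) (pos a))).
  { apply Cmod_gt_0. intro E'. apply Hne.
    replace (pos c0) with (Cplus (Cminus (pos c0) (pos a)) (pos a)) by ring.
    rewrite E'. ring. }
  lra.
Qed.

Lemma Cplus_cancel (p d1 d2 : C) : Cplus p d1 = Cplus p d2 -> d1 = d2.
Proof.
  intros E. replace d1 with (Cplus (Cplus p d1) (Copp p)) by ring.
  rewrite E. ring.
Qed.

Lemma sep_coloc n A (F : nat -> C) (pos : nat -> C) b i j w : (i < n)%nat -> (j < n)%nat -> (w < n)%nat ->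
  pos i = pos j -> pos w <> pos i -> b i = true -> (1 <= A i)%nat -> A i <> A j ->
  F i <> 0 -> F j <> 0 ->
  Cplus (pos i) (disp n A F pos b i) <> Cplus (pos j) (disp n A F pos b j).
Proof.
  intros Hi Hj Hw Hij Hwi Hb Hk Hne HFi HFj E.
  rewrite <- Hij in E. apply Cplus_cancel in E.
  destruct (Gi_ge n pos i w Hw Hwi) as [_ HG].
  assert (HGj : Gi n pos j = Gi n pos i) by (unfold Gi; rewrite Hij; reflexivity).
  pose proof (disp_mod n A F pos b i HFi Hb HG) as Mi.
  pose proof (rr_pos _ Hk).
  assert (0 < rr (A i) / Gi n pos i) by (apply Rmult_lt_0_compat; auto; apply Rinv_0_lt_compat; auto).
  destruct (b j) eqn:Hbj.
  - rewrite <- HGj in HG. pose proof (disp_mod n A F pos b j HFj Hbj HG) as Mj.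
    rewrite HGj in Mj. rewrite E, Mj in Mi.
    apply Hne, rr_inj.
    apply (f_equal (fun z => z * Gi n pos i)) in Mi. rewrite HGj in HG.
    field_simplify in Mi; lra.
  - unfold disp at 2 in E. rewrite Hbj in E. rewrite E, Cmod_0 in Mi. lra.
Qed.

Lemma escape n A (F : nat -> C) (pos : nat -> C) b i z :
  pos i = pos z -> b i = true -> (1 <= A i)%nat -> A z = 0%nat -> F i <> 0 ->
  Cplus (pos i) (disp n A F pos b i) <> Cplus (pos z) (disp n A F pos b z).
Proof.
  intros Hiz Hb Hk Hz HF E. rewrite <- Hiz in E. apply Cplus_cancel in E.
  rewrite (disp_class0 n A F pos b z Hz) in E.
  exact (disp_nz n A F pos b i HF Hb Hk E).
Qed.

Definition PhiL (c : nat) : list target := map phi (seq 0 c).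

Lemma nth_PhiL c k : (k < c)%nat -> nth k (PhiL c) dflt_target = phi k.
Proof.
  intros Hk. unfold PhiL. rewrite (nth_indep _ dflt_target (phi 0%nat)).
  - rewrite map_nth, seq_nth by auto. reflexivity.
  - rewrite length_map, length_seq. auto.
Qed.

Lemma exec_S n c A (F : nat -> C) P0 act t i : (A i < c)%nat ->
  exec n (PhiL c) A F P0 act (S t) i =
  Cplus (exec n (PhiL c) A F P0 act t i) (disp n A F (exec n (PhiL c) A F P0 act t) (act t) i).
Proof.
  intros H. simpl. unfold disp. destruct (act t i).
  - rewrite nth_PhiL by auto. reflexivity.
  - apply injective_projections; simpl; ring.
Qed.

Lemma collect (N : nat) (Q : nat -> nat -> Prop) :
  (forall x T T', Q x T -> (T <= T')%nat -> Q x T') ->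
  (forall x, (x < N)%nat -> exists T, Q x T) -> exists T, forall x, (x < N)%nat -> Q x T.
Proof.
  intros Hm. induction N as [|N IH]; intros H.
  - exists 0%nat. intros x Hx. lia.
  - destruct IH as [T1 H1]. { intros x Hx. apply H. lia. }
    destruct (H N ltac:(lia)) as [T2 H2].
    exists (Nat.max T1 T2). intros x Hx.
    destruct (Nat.eq_dec x N) as [->|Hne].
    + apply (Hm _ T2); auto; lia.
    + apply (Hm _ T1); [apply H1; lia|lia].
Qed.

Lemma upper_solves (n c : nat) : (1 <= c)%nat -> solves_cSCT n c (PhiL c).
Proof.
  intros Hc A F P0 act HA HF Hfair.
  unfold PhiL in HA at 1. rewrite length_map, length_seq in HA.
  destruct HA as [HAr HAs].
  set (pos := exec n (PhiL c) A F P0 act).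
  assert (HS : forall t i, (i < n)%nat -> pos (S t) i = Cplus (pos t i) (disp n A F (pos t) (act t) i)).
  { intros t i Hi. unfold pos. apply exec_S. auto. }
  assert (Hpers : forall a b t, (a < n)%nat -> (b < n)%nat -> pos t a <> pos t b ->
            forall t', (t <= t')%nat -> pos t' a <> pos t' b).
  { intros a b t Ha Hb Hne t' Ht. induction Ht; auto.
    rewrite !HS by auto. apply nomerge; auto. }
  assert (Hstep : forall i j w t, (i < n)%nat -> (j < n)%nat -> (w < n)%nat ->
            (1 <= A i)%nat -> A i <> A j -> act t i = true -> pos t w <> pos t i ->
            exists T, forall t', (T <= t')%nat -> pos t' i <> pos t' j).
  { intros i j w t Hi Hj Hw Hk Hne Ha Hwi.
    destruct (Classical_Prop.classic (pos t i = pos t j)) as [E|E].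
    - exists (S t). intros t' Ht'. apply (Hpers i j (S t)); auto.
      rewrite !HS by auto. apply (sep_coloc n A F (pos t) (act t) i j w); auto.
    - exists t. intros t' Ht'. apply (Hpers i j t); auto. }
  destruct (HAs 0%nat ltac:(lia)) as [z [Hz Hz0]].
  assert (Hsep : forall i j, (i < n)%nat -> (j < n)%nat -> (1 <= A i)%nat -> A i <> A j ->
            exists T, forall t', (T <= t')%nat -> pos t' i <> pos t' j).
  { intros i j Hi Hj Hk Hne.
    destruct (Hfair i Hi 0%nat) as [t1 [_ Ha1]].
    destruct (Classical_Prop.classic (exists w, (w < n)%nat /\ pos t1 w <> pos t1 i)) as [[w [Hw Hwi]]|Hg].
    - apply (Hstep i j w t1); auto.
    - assert (Ezi : pos t1 i = pos t1 z).
      { destruct (Classical_Prop.classic (pos t1 z = pos t1 i)) as [e|e]; auto.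
        exfalso. apply Hg. exists z. auto. }
      assert (Hsz : pos (S t1) i <> pos (S t1) z).
      { rewrite !HS by auto. apply escape; auto. }
      destruct (Hfair i Hi (S t1)) as [t2 [Ht2 Ha2]].
      assert (Hzi : pos t2 z <> pos t2 i).
      { intro e. apply (Hpers i z (S t1) Hi Hz Hsz t2 Ht2). auto. }
      apply (Hstep i j z t2); auto. }
  assert (Hall : exists T, forall i, (i < n)%nat -> forall j, (j < n)%nat -> A i <> A j ->
            forall t', (T <= t')%nat -> pos t' i <> pos t' j).
  { apply collect.
    - intros x T T' H HT j Hj Hne t' Ht'. apply H; auto. lia.
    - intros i Hi. apply collect.
      + intros x T T' H HT Hne t' Ht'. apply H; auto. lia.
      + intros j Hj.
        destruct (Nat.eq_dec (A i) (A j)) as [e|Hne].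
        * exists 0%nat. intro; contradiction.
        * destruct (Nat.eq_dec (A i) 0) as [e0|n0].
          -- destruct (Hsep j i Hj Hi ltac:(lia) (fun e => Hne (eq_sym e))) as [T HT].
             exists T. intros _ t' Ht' e. apply (HT t' Ht'). auto.
          -- destruct (Hsep i j Hi Hj ltac:(lia) Hne) as [T HT].
             exists T. intros _. auto. }
  destruct Hall as [T HT].
  exists T.
  assert (Hb : forall m, (m <= c)%nat -> exists l : list point, length l = m /\ NoDup l /\
            forall p, In p l -> exists i, (i < n)%nat /\ (A i < m)%nat /\ p = pos T i).
  { induction m as [|m IH]; intros Hm.
    - exists nil. split; [reflexivity|]. split; [constructor|]. intros p [].
    - destruct (IH ltac:(lia)) as [l [Hl [Hnd Hin]]].
      destruct (HAs m ltac:(lia)) as [r [Hr Hrm]].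
      exists (pos T r :: l). split; [simpl; lia|]. split.
      + constructor; auto. intro Hp. apply Hin in Hp. destruct Hp as [i [Hi [Him Ep]]].
        apply (HT i Hi r Hr ltac:(lia) T (le_n T)). auto.
      + intros p [<-|Hp].
        * exists r. repeat split; auto. lia.
        * destruct (Hin p Hp) as [i [Hi [Him Ep]]]. exists i. split; auto. }
  destruct (Hb c (le_n c)) as [l [Hl [Hnd Hin]]].
  exists l. split; auto. split; auto.
  intros p Hp. destruct (Hin p Hp) as [i [Hi [_ ->]]].
  unfold config_ms. apply in_map_iff. exists i. split; auto. apply in_seq. lia.
Qed.

Lemma upper_alg (n c : nat) : (c <= n)%nat -> is_algorithm n c (PhiL c).
Proof.
  intros Hcn. split; [unfold PhiL; rewrite length_map, length_seq; auto|].
  split; auto. split.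
  - intros k Hk s s' Hp. rewrite nth_PhiL by auto. unfold phi. rewrite (gs_perm s s' Hp). reflexivity.
  - intros k l Hk Hl Hkl. rewrite !nth_PhiL by auto.
    exists [origin]. split; [left; reflexivity|].
    unfold phi. assert (Hg : gs [origin] = 0).
    { apply gs_zero. intros x [<-|[]]. reflexivity. }
    rewrite Hg. destruct Req_EM_T as [_|e]; [|lra].
    intro E. apply Hkl. apply INR_eq. apply (f_equal fst) in E. exact E.
Qed.

Theorem theorem1 (n c : nat) :
  (1 <= n)%nat -> (1 <= c <= n)%nat ->
  (exists Phi : list target, is_algorithm n c Phi /\ solves_cSCT n c Phi) /\
  (forall (m : nat) (Phi : list target),
     (1 <= m < c)%nat -> is_algorithm n m Phi -> ~ solves_cSCT n c Phi).
Proof.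
  intros Hn Hc. split.
  - exists (PhiL c). split; [apply upper_alg; lia|apply upper_solves; lia].
  - intros m Phi Hm Halg. apply (lower_bound n c m Phi Hm Halg).
Qed.
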